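(* Let $m\ge3$ and let $T_m$ be the set of permutations $\tau\in\mathcal{S}_m$ with $\tau_{m-1}=m$ and $\tau_m=m-1$. A permutation $\pi\in\mathcal{S}_n$ avoids every pattern in $T_m$ if and only if every element $(i,j)$ of its essential set $\mathcal{E}(\pi)$ has rank $\rho(i,j)\le m-3$.
   Context: A permutation $\pi\in\mathcal{S}_n$ avoids $\tau\in\mathcal{S}_k$ if there are no indices $i_1<\dots<i_k$ with $\pi_{i_1}\cdots\pi_{i_k}$ in the same relative order as $\tau_1\cdots\tau_k$. Represent $\pi$ by an $n\times n$ array, rows $i$ numbered top to bottom, columns $j$ left to right, with a dot in square $(i,\pi_i)$. The diagram $D(\pi)$ is the set of squares $(i,j)$ with $\pi_i>j$ and $\pi^{-1}(j)>i$. The essential set $\mathcal{E}(\pi)$ is the set of $(i,j)\in D(\pi)$ with $(i+1,j)\notin D(\pi)$ and $(i,j+1)\notin D(\pi)$ (squares outside the array count as not in $D(\pi)$). The rank of a square $(i,j)$ is $\rho(i,j)=\#\{k<i:\pi_k<j\}$. *)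

(* Defs.v *)
From mathcomp Require Import all_boot all_order all_fingroup.
Set Implicit Arguments. Unset Strict Implicit. Unset Printing Implicit Defensive.

(* Permutations of {1..n} are modelled as 'S_n = {perm 'I_n}, i.e. 0-based:
   row i (0-based) has its dot in column p i (0-based). *)

Definition contains (n k : nat) (p : 'S_n) (tau : 'S_k) : Prop :=
  exists f : 'I_k -> 'I_n,
    (forall a b : 'I_k, a < b -> f a < f b) /\
    (forall a b : 'I_k, (p (f a) < p (f b)) = (tau a < tau b)).

Definition avoids (n k : nat) (p : 'S_n) (tau : 'S_k) : Prop := ~ contains p tau.

(* T_m : tau_{m-1} = m and tau_m = m-1 (1-based), i.e. 0-based
   tau(m-2) = m-1 and tau(m-1) = m-2. *)
Definition in_Tm (m : nat) (tau : 'S_m) : Prop :=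
  forall i : 'I_m,
    (val i = m - 2 -> val (tau i) = m - 1) /\
    (val i = m - 1 -> val (tau i) = m - 2).

(* Diagram: squares (i,j) with pi_i > j and pi^{-1}(j) > i (0-based; squares
   outside the array are not in the diagram). *)
Definition in_diagram (n : nat) (p : 'S_n) (i j : nat) : bool :=
  [exists a : 'I_n, [exists b : 'I_n,
     [&& val a == i, val b == j, b < p a & a < (p^-1)%g b]]].

Definition in_essential (n : nat) (p : 'S_n) (i j : nat) : bool :=
  [&& in_diagram p i j, ~~ in_diagram p i.+1 j & ~~ in_diagram p i j.+1].

Definition rank (n : nat) (p : 'S_n) (i j : nat) : nat :=
  #|[set k : 'I_n | (val k < i) && (val (p k) < j)]|.

(* Main.v *)
Require Import Defs.
From mathcomp Require Import all_boot all_order all_fingroup.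
From mathcomp Require Import zify.

Lemma inc_inj m n (f : 'I_m -> 'I_n) :
  (forall a b : 'I_m, a < b -> f a < f b) -> injective f.
Proof.
move=> h x y e; apply/val_inj.
case: (ltngtP (val x) (val y)) => // [hxy|hxy]; [have := h _ _ hxy | have := h _ _ hxy]; rewrite e ltnn //.
Qed.

Lemma rank_perm m (v : 'I_m -> nat) : injective v ->
  exists tau : 'S_m, (forall x y, (tau x < tau y) = (v x < v y)) /\
     forall x, val (tau x) = #|[set y | v y < v x]|.
Proof.
move=> vinj.
have bnd x : #|[set y | v y < v x]| < m.
  have : #|x |: [set y | v y < v x]| <= #|'I_m| by apply: max_card.
  rewrite cardsU1 card_ord inE ltnn /=. done.
pose g x := Ordinal (bnd x).
have mono x y : (g x < g y) = (v x < v y).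
  rewrite /=; case hv: (v x < v y).
    apply: proper_card; apply/properP; split.
      by apply/subsetP => z; rewrite !inE => /ltn_trans; apply.
    by exists x; rewrite !inE ?hv ?ltnn.
  apply/negbTE; rewrite -leqNgt; apply: subset_leq_card.
  apply/subsetP => z; rewrite !inE => hz; apply: (leq_trans hz); by rewrite leqNgt hv.
have ginj : injective g.
  move=> x y e; apply: vinj; have := mono x y; have := mono y x; rewrite e ltnn.
  by case: ltngtP.
exists (perm ginj); split => [x y|x]; by rewrite !permE.
Qed.

Definition Bad m {n} (p : 'S_n) := exists a b : 'I_n,
  [/\ a < b, p b < p a & m - 2 <= rank p a (p b)].

Lemma contains_bad m n (p : 'S_n) (tau : 'S_m) :
  3 <= m -> in_Tm tau -> contains p tau -> Bad m p.
Proof.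
move=> m3 hT [f [finc fiso]].
have h2 : m - 2 < m by lia.
have h1 : m - 1 < m by lia.
pose ia := Ordinal h2; pose ib := Ordinal h1.
have ta : val (tau ia) = m - 1 by apply: (proj1 (hT ia)).
have tb : val (tau ib) = m - 2 by apply: (proj2 (hT ib)).
have finj := @inc_inj _ _ f finc.
exists (f ia), (f ib); split.
- by apply: finc => /=; lia.
- by rewrite fiso ta tb; lia.
have hw : m - 2 <= m by lia.
pose g (r : 'I_(m-2)) := f (widen_ord hw r).
have ginj : injective g.
  by move=> r1 r2 /finj /(congr1 val) /= /val_inj.
rewrite /rank.
have <- : #|g @: setT| = m - 2 by rewrite card_imset // cardsT card_ord.
apply: subset_leq_card; apply/subsetP => _ /imsetP [r _ ->]; rewrite inE.
have hr := ltn_ord r.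
apply/andP; split.
  by rewrite /g; apply: finc => /=.
rewrite /g fiso tb.
have n1 : widen_ord hw r != ia by rewrite -val_eqE /=; lia.
have n2 : widen_ord hw r != ib by rewrite -val_eqE /=; lia.
have := ltn_ord (tau (widen_ord hw r)).
have : tau (widen_ord hw r) != tau ia by rewrite (inj_eq perm_inj).
have : tau (widen_ord hw r) != tau ib by rewrite (inj_eq perm_inj).
rewrite -!val_eqE ta tb /=. lia.
Qed.

Lemma bad_contains m n (p : 'S_n) :
  3 <= m -> Bad m p -> exists tau : 'S_m, in_Tm tau /\ contains p tau.
Proof.
move=> m3 [a [b [hab hp hr]]].
pose S := [set k : 'I_n | (nat_of_ord k < a) && (nat_of_ord (p k) < p b)].
pose s := enum S.
have hs : size s = rank p a (p b) by rewrite /s -cardE.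
have memS k : (k \in s) = (nat_of_ord k < a) && (nat_of_ord (p k) < p b) by rewrite mem_enum inE.
have sorted_s : sorted (relpre val ltn) s.
  have -> : s = filter (mem S) (enum 'I_n).
    by rewrite /s enumT.
  apply: sorted_filter; first by move=> x y z /=; apply: ltn_trans.
  by rewrite -sorted_map val_enum_ord iota_ltn_sorted.
have nth_lt r1 r2 : r1 < r2 < size s -> nth a s r1 < nth a s r2.
  move=> /andP [h12 h2].
  apply: (sorted_ltn_nth (leT := relpre val ltn)) => //.
    by move=> x y z /= ; apply: ltn_trans.
  by rewrite inE; apply: ltn_trans h2.
have nth_in r : r < m - 2 -> nth a s r \in s.
  by move=> hr'; apply: mem_nth; rewrite hs; lia.
pose f (r : 'I_m) : 'I_n :=
  if nat_of_ord r < m - 2 then nth a s r else if nat_of_ord r == m - 2 then a else b.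
have finc (x y : 'I_m) : x < y -> f x < f y.
  move=> hxy; rewrite /f.
  case: ifP => hx.
    case: ifP => hy.
      apply: nth_lt; rewrite hs. lia.
    have := nth_in _ hx; rewrite memS => /andP [h _].
    by case: ifP => _ //; apply: ltn_trans hab.
  have hy : ~~ (nat_of_ord y < m - 2) by lia.
  rewrite (negbTE hy).
  have hyn : nat_of_ord y != m - 2 by lia.
  rewrite (negbTE hyn).
  have hy1 : nat_of_ord y = m - 1 by have := ltn_ord y; lia.
  have hx1 : nat_of_ord x == m - 2 by lia.
  by rewrite hx1.
have finj := @inc_inj _ _ f finc.
pose v (r : 'I_m) := nat_of_ord (p (f r)).
have vinj : injective v.
  by move=> x y /val_inj /perm_inj /finj.
have [tau [tmono tval]] := @rank_perm _ v vinj.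
exists tau; split; last first.
  by exists f; split => // x y; rewrite tmono.
have vlt r : nat_of_ord r < m - 2 -> v r < p b.
  move=> hr'; rewrite /v /f hr'.
  by have := nth_in _ hr'; rewrite memS => /andP [].
have h2 : m - 2 < m by lia.
pose ia := Ordinal h2.
have via : v ia = p a by rewrite /v /f /= ltnn eqxx.
have Sa : [set y | v y < v ia] = [set~ ia].
  apply/setP => y; rewrite !inE via.
  case: (ltnP (nat_of_ord y) (m - 2)) => hy.
    have -> : y != ia by rewrite -val_eqE /=; lia.
    by have := vlt _ hy; move/ltn_trans; apply.
  case: (eqVneq y ia) => [->|hne]; first by rewrite via ltnn.
  have hy1 : nat_of_ord y != m - 2 by move: hne; rewrite -val_eqE.
  have hy' : (nat_of_ord y < m - 2) = false by lia.
  by rewrite /v /f hy' (negbTE hy1) hp.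
move=> i; split => hi.
  rewrite tval.
  have -> : i = ia by apply/val_inj.
  by rewrite Sa cardsC1 card_ord; lia.
rewrite tval.
have hi' : nat_of_ord i = m - 1 := hi.
have vib : v i = p b.
  have e1 : (nat_of_ord i < m - 2) = false by lia.
  have e2 : (nat_of_ord i == m - 2) = false by apply/negbTE; lia.
  by rewrite /v /f e1 e2.
have Sb : [set y | v y < v i] = [set~ ia] :\ i.
  apply/setP => y; rewrite !inE vib.
  case: (ltnP y (m-2)) => hy.
    rewrite (vlt _ hy).
    have -> : y != i by rewrite -val_eqE /= hi'; lia.
    have -> : y != ia by rewrite -val_eqE /=; lia.
    done.
  case: (eqVneq y ia) => [->|hne].
    rewrite via andbF; apply/negbTE; rewrite -leqNgt; exact: ltnW hp.
  have -> : y = i.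
    apply/val_inj; move: hne; rewrite -val_eqE /= hi'; have := ltn_ord y; lia.
  by rewrite eqxx /= vib ltnn.
have := cardsD1 i [set~ ia].
rewrite cardsC1 card_ord -Sb !inE.
have -> : i != ia by rewrite -val_eqE /= hi'; lia.
simpl. lia.
Qed.

Lemma diag_lt n (p : 'S_n) i j : in_diagram p i j -> i < n /\ j < n.
Proof.
case/existsP => x /existsP [y /and4P [/eqP <- /eqP <- _ _]]; split; exact: ltn_ord.
Qed.

Lemma rank_monoS n (p : 'S_n) i j i' j' : i <= i' -> j <= j' ->
  rank p i j <= rank p i' j'.
Proof.
move=> hi hj; apply: subset_leq_card; apply/subsetP => k; rewrite !inE.
case/andP => h1 h2; apply/andP; split.
  exact: leq_trans h1 hi.
exact: leq_trans h2 hj.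
Qed.

Lemma diag_ess n (p : 'S_n) k : forall i j, (n - i) + (n - j) <= k ->
  in_diagram p i j -> exists i' j', in_essential p i' j' /\ rank p i j <= rank p i' j'.
Proof.
elim: k => [|k IH] i j hk hd; have [hi hj] := @diag_lt _ _ _ _ hd.
  lia.
case he: (in_essential p i j); first by exists i, j.
case hd1: (in_diagram p i.+1 j).
  have [i' [j' [h1 h2]]] := IH i.+1 j ltac:(lia) hd1.
  exists i', j'; split => //; apply: leq_trans h2; exact: rank_monoS.
case hd2: (in_diagram p i j.+1).
  have [i' [j' [h1 h2]]] := IH i j.+1 ltac:(lia) hd2.
  exists i', j'; split => //; apply: leq_trans h2; exact: rank_monoS.
by move: he; rewrite /in_essential hd hd1 hd2.
Qed.

Theorem theorem5p1 (m n : nat) (p : 'S_n) :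
  3 <= m ->
  ((forall tau : 'S_m, in_Tm tau -> avoids p tau) <->
   (forall i j : nat, in_essential p i j -> rank p i j <= m - 3)).
Proof.
move=> m3; split.
  move=> hav i j hess; rewrite leqNgt; apply/negP => hr.
  have hd : in_diagram p i j by case/and3P: hess.
  move: hd => /existsP [a /existsP [b' /and4P [/eqP ea /eqP eb h1 h2]]].
  have [tau [hT hc]] : exists tau : 'S_m, in_Tm tau /\ contains p tau.
    apply: bad_contains => //.
    exists a, ((p^-1)%g b'); split => //; rewrite permKV //.
    rewrite ea eb; lia.
  exact: hav tau hT hc.
move=> hess tau hT hc.
have [a [b [hab hp hr]]] := @contains_bad m n p tau m3 hT hc.
have hd : in_diagram p a (p b).
  apply/existsP; exists a; apply/existsP; exists (p b).
  by rewrite !eqxx hp permK hab.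
have [i' [j' [he hr']]] := @diag_ess n p ((n - a) + (n - p b)) _ _ (leqnn _) hd.
have := hess _ _ he; lia.
Qed.
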